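(* Let $\mathbb V$ be the 2-vector space of a 2-term complex $V_1\xrightarrow{\mathrm d}V_0$ and $\mu=(\mu_0,\mu_1,\mu_2)$ an isomorphism of Lie 2-algebras $\mathfrak{gl}(\mathbb V)\to\mathfrak{gl}(\mathbb V)$. For objects $e_1=A+u$, $e_2=B+v$, $e_3=C+w$ of $\mathfrak{gl}(\mathbb V)\oplus\mathbb V$, set $J_{e_1,e_2,e_3}=[[A,B],C]+\mu_2(A,B)(w)$, where $[[A,B],C]$ denotes the identity morphism of $[[A,B],C]$ in $\mathfrak{gl}(\mathbb V)$ and $\mu_2(A,B)(w)$ is the action of the morphism $\mu_2(A,B)$ on the identity morphism of $w$. Then $J_{e_1,e_2,e_3}$ is a morphism from $\{\{e_1,e_2\}_\mu,e_3\}_\mu$ to $\{e_1,\{e_2,e_3\}_\mu\}_\mu-\{e_2,\{e_1,e_3\}_\mu\}_\mu$, and $J$ is a natural transformation between these two trilinear functors.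
   Context: All vector spaces are finite-dimensional over $\mathbb R$. A 2-vector space is a category internal to vector spaces. For a 2-term complex $V_1\xrightarrow{\mathrm d}V_0$, $\mathbb V$ has objects $V_0$, morphisms $V_0\oplus V_1$ ($u+m$), $s(u+m)=u$, $t(u+m)=u+\mathrm dm$, composition $(u+m)\cdot(u+\mathrm dm+n)=u+m+n$. Let $\mathrm{End}^0_{\mathrm d}(\mathbb V)=\{A=(A_0,A_1):A_0\mathrm d=\mathrm dA_1\}$, $\mathrm{End}^1(\mathbb V)=\mathrm{Hom}(V_0,V_1)$, $\delta\phi=(\mathrm d\phi,\phi\mathrm d)$; brackets $[A,B]$ componentwise commutator, $[A,\phi]=-[\phi,A]=A_1\phi-\phi A_0$, $[\phi,\psi]_\delta=\phi\mathrm d\psi-\psi\mathrm d\phi$. The strict Lie 2-algebra $\mathfrak{gl}(\mathbb V)$ has objects $\mathrm{End}^0_{\mathrm d}(\mathbb V)$, morphisms $A+\phi$, $s(A+\phi)=A$, $t(A+\phi)=A+\delta\phi$, bracket $[A+\phi,B+\psi]=[A,B]+[\phi,\psi]_\delta+[A,\psi]+[\phi,B]$, and acts on $\mathbb V$ by $A(u)=A_0u$, $(A+\phi)(u+m)=A_0u+(A_1m+\phi(u+\mathrm dm))$. A Lie 2-algebra is a 2-vector space $C$ with a skew-symmetric bilinear functor $[\cdot,\cdot]$ and a skew-symmetric trilinear natural isomorphism (Jacobiator) $J_{x,y,z}:[[x,y],z]\to[x,[y,z]]+[[x,z],y]$ satisfying the Jacobiator identity $J_{[w,x],y,z}([J_{w,x,z},y]+1)(J_{w,[x,z],y}+J_{[w,z],x,y}+J_{w,x,[y,z]})=[J_{w,x,y},z](J_{[w,y],x,z}+J_{w,[x,y],z})([J_{w,y,z},x]+1)([w,J_{x,y,z}]+1)$;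 it is strict when $J$ is the identity. A Lie 2-algebra morphism $\mu:C\to C'$ is a linear functor $(\mu_0,\mu_1)$ (object and morphism maps) with a skew-symmetric bilinear natural transformation $\mu_2(u,v):\mu_0[u,v]\to[\mu_0u,\mu_0v]$ such that for all objects $u,v,w$ the composites $\mu_0[[u,v],w]\xrightarrow{\mu_2([u,v],w)}[\mu_0[u,v],\mu_0w]\xrightarrow{[\mu_2(u,v),1]}[[\mu_0u,\mu_0v],\mu_0w]\xrightarrow{J}[\mu_0u,[\mu_0v,\mu_0w]]+[\mu_0v,[\mu_0w,\mu_0u]]$ and $\mu_0[[u,v],w]\xrightarrow{\mu_1J_{u,v,w}}\mu_0[u,[v,w]]+\mu_0[v,[w,u]]\xrightarrow{\mu_2(u,[v,w])+\mu_2(v,[w,u])}[\mu_0u,\mu_0[v,w]]+[\mu_0v,\mu_0[w,u]]\xrightarrow{[1,\mu_2(v,w)]+[1,\mu_2(w,u)]}[\mu_0u,[\mu_0v,\mu_0w]]+[\mu_0v,[\mu_0w,\mu_0u]]$ coincide; it is an isomorphism if $(\mu_0,\mu_1)$ is an isomorphism of 2-vector spaces. The twisted bracket on $\mathfrak{gl}(\mathbb V)\oplus\mathbb V$ is $\{A+\phi+u+m,B+\psi+v+n\}_\mu=[A+\phi,B+\psi]+\mu_1(A+\phi)(v+n)$ on morphisms and $\{A+u,B+v\}_\mu=[A,B]+\mu_0(A)(v)$ on objects. *)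

(* Defs.v *)
(* V_0 = 'cV[R]_n0, V_1 = 'cV[R]_n1, d : 'M_(n0,n1);
   linear maps are represented by matrices acting on column vectors. *)
From HB Require Import structures.
From mathcomp Require Import all_boot all_order all_algebra.
Set Implicit Arguments. Unset Strict Implicit. Unset Printing Implicit Defensive.
Import Order.TTheory GRing.Theory Num.Theory.
Local Open Scope ring_scope.

Section Gl.
Variables (R : realFieldType) (n0 n1 : nat) (d : 'M[R]_(n0, n1)).

Definition endo := ('M[R]_n0 * 'M[R]_n1)%type.
Definition End0d (A : endo) : Prop := A.1 *m d = d *m A.2.
Definition hom1 := 'M[R]_(n1, n0).
Definition glmor := (endo * hom1)%type.
Definition is_glmor (f : glmor) : Prop := End0d f.1.

Definition gl_delta (phi : hom1) : endo := (d *m phi, phi *m d).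
Definition gl_src (f : glmor) : endo := f.1.
Definition gl_tgt (f : glmor) : endo := f.1 + gl_delta f.2.
Definition gl_id (A : endo) : glmor := (A, 0).
(* (A + phi) . (A + delta phi + psi) = A + phi + psi  (diagrammatic order) *)
Definition gl_comp (f g : glmor) : glmor := (f.1, f.2 + g.2).

Definition gl_br (A B : endo) : endo :=
  (A.1 *m B.1 - B.1 *m A.1, A.2 *m B.2 - B.2 *m A.2).
Definition gl_act1 (A : endo) (psi : hom1) : hom1 := A.2 *m psi - psi *m A.1.
Definition gl_brd (phi psi : hom1) : hom1 := phi *m d *m psi - psi *m d *m phi.
(* [A+phi, B+psi] = [A,B] + [phi,psi]_delta + [A,psi] + [phi,B],  [phi,B] = -[B,phi] *)
Definition gl_brm (f g : glmor) : glmor :=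
  (gl_br f.1 g.1, gl_brd f.2 g.2 + gl_act1 f.1 g.2 - gl_act1 g.1 f.2).

Definition vobj := 'cV[R]_n0.
Definition vmor := ('cV[R]_n0 * 'cV[R]_n1)%type.
Definition v_id (u : vobj) : vmor := (u, 0).
Definition act0 (A : endo) (u : vobj) : vobj := A.1 *m u.
Definition act1 (f : glmor) (x : vmor) : vmor :=
  (f.1.1 *m x.1, f.1.2 *m x.2 + f.2 *m (x.1 + d *m x.2)).

(** ---- mu = (mu0, mu1, mu2) : gl(V) -> gl(V) is an isomorphism of Lie 2-algebras.
   The Jacobiator of gl(V) is the identity (gl(V) is strict). *)
Definition lie2_iso (mu0 : endo -> endo) (mu1 : glmor -> glmor)
    (mu2 : endo -> endo -> glmor) : Prop :=
  (forall A, End0d A -> End0d (mu0 A)) /\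
  (forall f, is_glmor f -> is_glmor (mu1 f)) /\
  (forall (a : R) A B, End0d A -> End0d B -> mu0 (a *: A + B) = a *: mu0 A + mu0 B) /\
  (forall (a : R) f g, is_glmor f -> is_glmor g ->
      mu1 (a *: f + g) = a *: mu1 f + mu1 g) /\
  (forall f, is_glmor f -> gl_src (mu1 f) = mu0 (gl_src f)) /\
  (forall f, is_glmor f -> gl_tgt (mu1 f) = mu0 (gl_tgt f)) /\
  (forall A, End0d A -> mu1 (gl_id A) = gl_id (mu0 A)) /\
  (forall f g, is_glmor f -> is_glmor g -> gl_tgt f = gl_src g ->
      mu1 (gl_comp f g) = gl_comp (mu1 f) (mu1 g)) /\
  (forall A B, End0d A -> End0d B -> is_glmor (mu2 A B)) /\
  (forall A B, End0d A -> End0d B -> gl_src (mu2 A B) = mu0 (gl_br A B)) /\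
  (forall A B, End0d A -> End0d B -> gl_tgt (mu2 A B) = gl_br (mu0 A) (mu0 B)) /\
  (forall A B, End0d A -> End0d B -> mu2 B A = - mu2 A B) /\
  (forall (a : R) A A' B, End0d A -> End0d A' -> End0d B ->
      mu2 (a *: A + A') B = a *: mu2 A B + mu2 A' B) /\
  (forall (a : R) A B B', End0d A -> End0d B -> End0d B' ->
      mu2 A (a *: B + B') = a *: mu2 A B + mu2 A B') /\
  (forall f g, is_glmor f -> is_glmor g ->
      gl_comp (mu1 (gl_brm f g)) (mu2 (gl_tgt f) (gl_tgt g)) =
      gl_comp (mu2 (gl_src f) (gl_src g)) (gl_brm (mu1 f) (mu1 g))) /\
  (* coherence with the (identity) Jacobiators *)
  (forall u v w, End0d u -> End0d v -> End0d w ->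
      gl_comp (gl_comp (mu2 (gl_br u v) w) (gl_brm (mu2 u v) (gl_id (mu0 w))))
              (gl_id (gl_br (gl_br (mu0 u) (mu0 v)) (mu0 w))) =
      gl_comp (gl_comp (mu1 (gl_id (gl_br (gl_br u v) w)))
                       (mu2 u (gl_br v w) + mu2 v (gl_br w u)))
              (gl_brm (gl_id (mu0 u)) (mu2 v w) + gl_brm (gl_id (mu0 v)) (mu2 w u))) /\
  (forall A B, End0d A -> End0d B -> mu0 A = mu0 B -> A = B) /\
  (forall B, End0d B -> exists2 A, End0d A & mu0 A = B) /\
  (forall f g, is_glmor f -> is_glmor g -> mu1 f = mu1 g -> f = g) /\
  (forall g, is_glmor g -> exists2 f, is_glmor f & mu1 f = g).

Definition sobj := (endo * vobj)%type.
Definition smor := (glmor * vmor)%type.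
Definition is_sobj (e : sobj) : Prop := End0d e.1.
Definition is_smor (f : smor) : Prop := is_glmor f.1.
Definition s_src (f : smor) : sobj := (gl_src f.1, f.2.1).
Definition s_tgt (f : smor) : sobj := (gl_tgt f.1, f.2.1 + d *m f.2.2).
Definition s_comp (f g : smor) : smor := (gl_comp f.1 g.1, (f.2.1, f.2.2 + g.2.2)).

Definition tbr0 (mu0 : endo -> endo) (e1 e2 : sobj) : sobj :=
  (gl_br e1.1 e2.1, act0 (mu0 e1.1) e2.2).
Definition tbr1 (mu1 : glmor -> glmor) (f g : smor) : smor :=
  (gl_brm f.1 g.1, act1 (mu1 f.1) g.2).

Definition Fobj mu0 (e1 e2 e3 : sobj) := tbr0 mu0 (tbr0 mu0 e1 e2) e3.
Definition Gobj mu0 (e1 e2 e3 : sobj) :=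
  tbr0 mu0 e1 (tbr0 mu0 e2 e3) - tbr0 mu0 e2 (tbr0 mu0 e1 e3).
Definition Fmor mu1 (f1 f2 f3 : smor) := tbr1 mu1 (tbr1 mu1 f1 f2) f3.
Definition Gmor mu1 (f1 f2 f3 : smor) :=
  tbr1 mu1 f1 (tbr1 mu1 f2 f3) - tbr1 mu1 f2 (tbr1 mu1 f1 f3).

Definition Jmap (mu2 : endo -> endo -> glmor) (e1 e2 e3 : sobj) : smor :=
  (gl_id (gl_br (gl_br e1.1 e2.1) e3.1), act1 (mu2 e1.1 e2.1) (v_id e3.2)).

End Gl.

(* Main.v *)
Require Import Defs.
From HB Require Import structures.
From mathcomp Require Import all_boot all_order all_algebra.
From Stdlib Require Import Ring.
Import Order.TTheory GRing.Theory Num.Theory.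
Local Open Scope ring_scope.
Section TE.
Variable V : zmodType.
Definition TE := (int * V)%type.
Definition te_add (x y : TE) : TE := (x.1 + y.1, x.2 + y.2).
Definition te_mul (x y : TE) : TE := (x.1 * y.1, x.2 *~ y.1 + y.2 *~ x.1).
Definition te_opp (x : TE) : TE := (- x.1, - x.2).
Definition te_sub (x y : TE) : TE := te_add x (te_opp y).
Definition te0 : TE := (0, 0).
Definition te1 : TE := (1, 0).
Lemma te_theory : ring_theory te0 te1 te_add te_mul te_sub te_opp (@eq TE).
Proof.
split.
- by move=> [a x]; rewrite /te_add /= !add0r.
- by move=> [a x] [b y]; rewrite /te_add /= addrC [x + _]addrC.
- by move=> [a x] [b y] [c z]; rewrite /te_add /= !addrA.
- by move=> [a x]; rewrite /te_mul /= mul1r mulr1z mul0rz add0r.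
- by move=> [a x] [b y]; rewrite /te_mul /= mulrC addrC.
- move=> [a x] [b y] [c z]; rewrite /te_mul /=; congr (_, _); first by rewrite mulrA.
  by rewrite !mulrzDl !mulrzA -addrA [y *~ a *~ c]mulrzAC [z *~ a *~ b]mulrzAC.
- move=> [a x] [b y] [c z]; rewrite /te_mul /te_add /=; congr (_, _); first by rewrite mulrDl.
  rewrite mulrzDr mulrzDl; rewrite -!addrA; congr (_ + _); rewrite addrCA; done.
- by [].
- by move=> [a x]; rewrite /te_add /te_opp /= !subrr.
Qed.
Definition tei (x : V) : TE := (0, x).
Lemma teiD x y : tei (x + y) = te_add (tei x) (tei y).
Proof. by rewrite /tei /te_add /= addr0. Qed.
Lemma teiN x : tei (- x) = te_opp (tei x).
Proof. by rewrite /tei /te_opp /= oppr0. Qed.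
Lemma tei0 : tei 0 = te0. Proof. by []. Qed.
Lemma tei_inj x y : tei x = tei y -> x = y.
Proof. by case. Qed.
End TE.

Ltac atomize := repeat match goal with |- context [tei ?T ?a] =>
  let t := fresh "t" in set t := tei T a; clearbody t end.
Ltac zm T := apply: (@tei_inj T); rewrite !(teiD, teiN) ?tei0; atomize; ring.
Ltac expand := rewrite ?(mulmxDl, mulmxDr, mulmxN, mulNmx, mulmxA, mulmx0, mul0mx).

Section Jac.
Variables (R : realFieldType) (n : nat).
Definition MTn : zmodType := 'M[R]_n.
Add Ring temn : (te_theory MTn).
Lemma foo (a b c : 'M[R]_n) : (a *m b - c) + c - a *m b = 0.
Proof. apply: (@tei_inj MTn); rewrite !(teiD, teiN) ?tei0. ring. Qed.
Lemma jacmx (X Y Z : 'M[R]_n) :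
  (X *m Y - Y *m X) *m Z - Z *m (X *m Y - Y *m X) =
  (X *m (Y *m Z - Z *m Y) - (Y *m Z - Z *m Y) *m X) -
  (Y *m (X *m Z - Z *m X) - (X *m Z - Z *m X) *m Y).
Proof. expand. zm MTn. Qed.
End Jac.

Section Main.
Variables (R : realFieldType) (n0 n1 : nat) (d : 'M[R]_(n0, n1)).
Definition MH : zmodType := 'M[R]_(n1, n0).
Definition M0 : zmodType := 'M[R]_n0.
Definition M1 : zmodType := 'M[R]_n1.
Definition C0 : zmodType := 'cV[R]_n0.
Definition C1 : zmodType := 'cV[R]_n1.
Definition MD : zmodType := 'M[R]_(n0, n1).
Add Ring temd : (te_theory MD).
Add Ring temh : (te_theory MH).
Add Ring tem0 : (te_theory M0).
Add Ring tem1 : (te_theory M1).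
Add Ring tec0 : (te_theory C0).
Add Ring tec1 : (te_theory C1).

Lemma hlE {A : endo R n0 n1} {k : nat} : End0d d A -> forall X : 'M[R]_(k, n0), X *m A.1 *m d = X *m d *m A.2.
Proof. by move=> hA X; rewrite -!mulmxA hA. Qed.

Lemma hlE' {P : 'M[R]_n0} {Q : 'M[R]_n1} {k : nat} : P *m d = d *m Q ->
  forall X : 'M[R]_(k, n0), X *m d *m Q = X *m P *m d.
Proof. by move=> hA X; rewrite -!mulmxA hA. Qed.

Lemma br_jac (A B C : endo R n0 n1) :
  gl_br (gl_br A B) C = gl_br A (gl_br B C) - gl_br B (gl_br A C).
Proof. by rewrite /gl_br; congr (_, _); rewrite /= jacmx. Qed.

Lemma br_End0d (A B : endo R n0 n1) : End0d d A -> End0d d B -> End0d d (gl_br A B).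
Proof.
move=> hA hB; rewrite /End0d /gl_br /=; expand.
rewrite ?(hA, hB, hlE hA, hlE hB). zm MD.
Qed.

Lemma tgt_brm (f g : glmor R n0 n1) : End0d d f.1 -> End0d d g.1 ->
  gl_tgt d (gl_brm d f g) = gl_br (gl_tgt d f) (gl_tgt d g).
Proof.
case: f => [[A0 A1] p]; case: g => [[B0 B1] q] /= hA hB.
rewrite /gl_tgt /gl_brm /gl_br /gl_delta /gl_brd /gl_act1 /=.
congr (_, _); expand.
- rewrite ?(hA, hB, hlE hA, hlE hB) /=. zm M0.
- rewrite ?(hA, hB, hlE hA, hlE hB) /=. zm M1.
Qed.

Lemma brm_jac (f g h : glmor R n0 n1) : End0d d f.1 -> End0d d g.1 -> End0d d h.1 ->
  (gl_brm d (gl_brm d f g) h).2 =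
  (gl_brm d f (gl_brm d g h) - gl_brm d g (gl_brm d f h)).2.
Proof.
case: f => [[A0 A1] p]; case: g => [[B0 B1] q]; case: h => [[C0' C1'] r] /= hA hB hC.
rewrite /gl_brm /gl_br /gl_brd /gl_act1 /=.
expand.
rewrite ?(hA, hB, hC, hlE hA, hlE hB, hlE hC) /=. zm MH.
Qed.

Lemma tgt_End0d {g : glmor R n0 n1} :
  End0d d g.1 -> End0d d (gl_tgt d g).
Proof.
case: g => [[A0 A1] p] hA; rewrite /End0d /gl_tgt /gl_delta /= mulmxDl mulmxDr hA.
by rewrite !mulmxA.
Qed.

Lemma pair00 : ((0 : 'M[R]_n0), (0 : 'M[R]_n1)) = 0.
Proof. by []. Qed.

Lemma main_aux (mu0 : endo R n0 n1 -> endo R n0 n1) (mu1 : glmor R n0 n1 -> glmor R n0 n1)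
    (mu2 : endo R n0 n1 -> endo R n0 n1 -> glmor R n0 n1) :
  lie2_iso d mu0 mu1 mu2 ->
  (forall e1 e2 e3 : sobj R n0 n1,
      is_sobj d e1 -> is_sobj d e2 -> is_sobj d e3 ->
      s_src (Jmap d mu2 e1 e2 e3) = Fobj mu0 e1 e2 e3 /\
      s_tgt d (Jmap d mu2 e1 e2 e3) = Gobj mu0 e1 e2 e3) /\
  (forall f1 f2 f3 : smor R n0 n1,
      is_smor d f1 -> is_smor d f2 -> is_smor d f3 ->
      s_tgt d (Fmor d mu1 f1 f2 f3) =
        s_src (Jmap d mu2 (s_tgt d f1) (s_tgt d f2) (s_tgt d f3)) /\
      s_tgt d (Jmap d mu2 (s_src f1) (s_src f2) (s_src f3)) =
        s_src (Gmor d mu1 f1 f2 f3) /\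
      s_comp (Fmor d mu1 f1 f2 f3) (Jmap d mu2 (s_tgt d f1) (s_tgt d f2) (s_tgt d f3)) =
      s_comp (Jmap d mu2 (s_src f1) (s_src f2) (s_src f3)) (Gmor d mu1 f1 f2 f3)).
Proof.
intros (h0 & h1 & hl0 & hl1 & hsrc & htgt & hid & hcomp & hm2 & hm2s & hm2t & hsk & hbl & hbr & hnat & hcoh & hi0 & hs0 & hi1 & hs1).
split.
- move=> [A u] [B v] [C w]; rewrite /is_sobj /= => hA hB hC.
  have s2 := hm2s A B hA hB; have t2 := hm2t A B hA hB.
  move: s2 t2; rewrite /Jmap /Fobj /Gobj /tbr0 /s_src /s_tgt /act1 /act0 /v_id /gl_id
    /gl_src /gl_tgt /gl_delta /=.
  case: (mu2 A B) => [[N0 N1] ph] /= s2 t2.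
  have t21 := congr1 fst t2; rewrite /= in t21.
  split; first by rewrite -s2.
  congr (_, _); first by rewrite mulmx0 mul0mx pair00 addr0 br_jac.
  rewrite !mulmx0 addr0 add0r mulmxA -mulmxDl t21 mulmxBl -!mulmxA.
  by [].
- move=> [g1 [u1 m1]] [g2 [u2 m2]] [g3 [u3 m3]]; rewrite /is_smor /is_glmor /= => hg1 hg2 hg3.
  have hh12 : End0d d (gl_brm d g1 g2).1 by exact: br_End0d.
  have ht1 := tgt_End0d hg1; have ht2 := tgt_End0d hg2; have ht3 := tgt_End0d hg3.
  split; [|split].
  + rewrite /s_tgt /s_src /Fmor /Jmap /tbr1 /=.
    congr (_, _); first by rewrite /gl_src /gl_id /= !tgt_brm.
    have hM := htgt _ hh12; have hMe := h1 _ hh12.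
    have s2 := hm2s _ _ ht1 ht2.
    rewrite tgt_brm // in hM.
    move: hM hMe s2; rewrite /gl_src /gl_tgt /gl_delta /is_glmor /act1 /v_id /=.
    case: (mu1 (gl_brm d g1 g2)) => [[P Q] c]; case: (mu2 _ _) => [[N0 N1] ph] /=.
    rewrite /End0d /= => hM hMe s2.
    have hM1 := congr1 fst hM; rewrite /= in hM1.
    have s21 := congr1 fst s2; rewrite /= in s21; rewrite s21 -hM1; expand; rewrite -?hMe; zm C0.
  + rewrite /s_tgt /s_src /Gmor /Jmap /tbr1 /=.
    have s2 := hm2s _ _ hg1 hg2; have t2 := hm2t _ _ hg1 hg2.
    have e1 := hsrc _ hg1; have e2 := hsrc _ hg2.
    move: s2 t2 e1 e2; rewrite /gl_src /gl_tgt /gl_delta /gl_id /act1 /v_id /=.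
    case: (mu2 _ _) => [[N0 N1] ph] /= s2 t2 e1 e2.
    have t21 := congr1 fst t2; rewrite /= in t21.
    congr (_, _); first by rewrite mulmx0 mul0mx pair00 addr0 br_jac.
    rewrite e1 e2 !mulmx0 addr0 add0r mulmxA -mulmxDl t21 mulmxBl -!mulmxA.
    by [].
  + have hn := hnat _ _ hg1 hg2.
    have t2 := hm2t _ _ hg1 hg2.
    have e1 := hsrc _ hg1; have e2 := hsrc _ hg2.
    have E1 := h1 _ hg1; have E2 := h1 _ hg2.
    rewrite /gl_src in e1 e2 hn t2; rewrite -e1 -e2 in t2.
    move: hn t2 E1 E2.
    rewrite /s_comp /Fmor /Jmap /Gmor /tbr1 /s_tgt /s_src /gl_comp /gl_id /act1 /v_id
      /gl_src /gl_tgt /gl_delta /is_glmor /End0d /=.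
    case: (mu1 (gl_brm d g1 g2)) => [[HP HQ] H2].
    case: (mu2 (g1.1 + _) _) => [[TP TQ] T2].
    case: (mu2 g1.1 g2.1) => [[NP NQ] N2].
    case: (mu1 g1) => [[P1 Q1] c1]; case: (mu1 g2) => [[P2 Q2] c2] /= hn t2 E1 E2.
    case: hn => -> -> hH.
    have t22 := congr1 snd t2; rewrite /= in t22.
    congr ((_, _), (_, _)).
    * by rewrite addr0 add0r; exact: (brm_jac g1 g2 g3 hg1 hg2 hg3).
    * have -> : H2 = N2 + (gl_brd d c1 c2 + gl_act1 (P1, Q1) c2 - gl_act1 (P2, Q2) c1) - T2.
        by rewrite -hH addrK.
      have -> : NQ = (Q1 *m Q2 - Q2 *m Q1) - N2 *m d by rewrite -t22 addrK.
      rewrite /gl_brd /gl_act1 /=.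
      expand.
      rewrite -?E1 -?E2 ?(hlE' E1, hlE' E2).
      zm C1.
Qed.

End Main.

Theorem mainTheorem13 (R : realFieldType) (n0 n1 : nat) (d : 'M[R]_(n0, n1))
    (mu0 : endo R n0 n1 -> endo R n0 n1) (mu1 : glmor R n0 n1 -> glmor R n0 n1)
    (mu2 : endo R n0 n1 -> endo R n0 n1 -> glmor R n0 n1) :
  lie2_iso d mu0 mu1 mu2 ->
  (* J_{e1,e2,e3} : {{e1,e2},e3} -> {e1,{e2,e3}} - {e2,{e1,e3}} *)
  (forall e1 e2 e3 : sobj R n0 n1,
      is_sobj d e1 -> is_sobj d e2 -> is_sobj d e3 ->
      s_src (Jmap d mu2 e1 e2 e3) = Fobj mu0 e1 e2 e3 /\
      s_tgt d (Jmap d mu2 e1 e2 e3) = Gobj mu0 e1 e2 e3) /\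
  (* naturality: the square F(f) ; J_{t f} = J_{s f} ; G(f) is defined and commutes *)
  (forall f1 f2 f3 : smor R n0 n1,
      is_smor d f1 -> is_smor d f2 -> is_smor d f3 ->
      s_tgt d (Fmor d mu1 f1 f2 f3) =
        s_src (Jmap d mu2 (s_tgt d f1) (s_tgt d f2) (s_tgt d f3)) /\
      s_tgt d (Jmap d mu2 (s_src f1) (s_src f2) (s_src f3)) =
        s_src (Gmor d mu1 f1 f2 f3) /\
      s_comp (Fmor d mu1 f1 f2 f3) (Jmap d mu2 (s_tgt d f1) (s_tgt d f2) (s_tgt d f3)) =
      s_comp (Jmap d mu2 (s_src f1) (s_src f2) (s_src f3)) (Gmor d mu1 f1 f2 f3)).
Proof. exact: main_aux. Qed.
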